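(* Let $\beta\in(3/2,\beta^*]$. Suppose $\omega,\omega'\in\Omega$ satisfy $\omega\prec\omega'$. Then for every $\vec z\in S_\beta$, $$(d_1(\omega,\vec z),d_2(\omega,\vec z),\ldots)\preceq(d_1(\omega',\vec z),d_2(\omega',\vec z),\ldots).$$
   Context: $\beta^*\approx1.5437$ is the real root of $x^3-2x^2+2x=2$. $\vec q_0=(0,0)$, $\vec q_1=(1,0)$, $\vec q_2=(0,1)$, $f_i(\vec z)=(\vec z+\vec q_i)/\beta$, $S_\beta$ the attractor of this IFS. $H=\{(x,y):x<\frac1\beta,\ y<\frac1\beta,\ x+y>\frac{1}{\beta(\beta-1)}\}$; $\tilde E_0=([0,\frac1\beta)\times[0,\frac1\beta))\setminus H$; $\tilde E_1=\{0\le y<\frac1\beta,\ \frac{1}{\beta(\beta-1)}<x+y\le\frac1{\beta-1}\}\setminus H$; $\tilde E_2=\{0\le x<\frac1\beta,\ \frac{1}{\beta(\beta-1)}<x+y\le\frac1{\beta-1}\}\setminus H$; $\tilde C_{01}=\{x\ge\frac1\beta,\ y\ge0,\ x+y\le\frac{1}{\beta(\beta-1)}\}$; $\tilde C_{12}=\{x\ge\frac1\beta,\ y\ge\frac1\beta,\ x+y\le\frac1{\beta-1}\}$; $\tilde C_{02}=\{x\ge0,\ y\ge\frac1\beta,\ x+y\le\frac{1}{\beta(\beta-1)}\}$. For $\{i,j,k\}=\{0,1,2\}$, $E_i=\bigl(\tilde E_i\cup\bigcup_{n\ge1}f_jf_i^n(H)\cup\bigcup_{n\ge1}f_kf_i^n(H)\bigr)\setminus\bigcup_{n\ge0}f_i^n(H)$;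 for $ij\in\{01,12,02\}$, $C_{ij}=\tilde C_{ij}\setminus\bigl(\bigcup_{n\ge1}f_if_j^n(H)\cup\bigcup_{n\ge1}f_jf_i^n(H)\bigr)$. $\Omega=\{0,1\}^{\mathbb N}$ with left shift $\sigma$. $K_\beta:\Omega\times S_\beta\to\Omega\times S_\beta$: $K_\beta(\omega,\vec z)=(\omega,\beta\vec z-\vec q_i)$ if $\vec z\in E_i$; $(\sigma\omega,\beta\vec z-\vec q_i)$ if $\omega_1=0$, $\vec z\in C_{ij}$; $(\sigma\omega,\beta\vec z-\vec q_j)$ if $\omega_1=1$, $\vec z\in C_{ij}$. The digit $d_1(\omega,\vec z)$ is the vector subtracted, and $d_n=d_1\circ K_\beta^{n-1}$. $\prec,\preceq$ denote lexicographic order on $\Omega$ and on $\{\vec q_0,\vec q_1,\vec q_2\}^{\mathbb N}$ (with $\vec q_0<\vec q_1<\vec q_2$). *)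

(* Defs.v *)
From HB Require Import structures.
From mathcomp Require Import all_boot all_order all_algebra.
From mathcomp Require Import all_classical all_reals all_analysis.
Set Implicit Arguments. Unset Strict Implicit. Unset Printing Implicit Defensive.
Import Order.TTheory GRing.Theory Num.Theory.
Import numFieldTopology.Exports numFieldNormedType.Exports.
Local Open Scope ring_scope.
Local Open Scope classical_set_scope.

Section Defs.
Variable R : realType.

Definition qv (i : nat) : R * R :=
  if i == 1%N then (1, 0) else if i == 2%N then (0, 1) else (0, 0).

Definition fmap (b : R) (i : nat) (z : R * R) : R * R :=
  ((z.1 + (qv i).1) / b, (z.2 + (qv i).2) / b).

Definition is_attractor (b : R) (S : set (R * R)) : Prop :=
  compact S /\ S !=set0 /\
  S = (fmap b 0 @` S) `|` (fmap b 1 @` S) `|` (fmap b 2 @` S).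

Definition inH (b : R) (z : R * R) : Prop :=
  z.1 < b^-1 /\ z.2 < b^-1 /\ (b * (b - 1))^-1 < z.1 + z.2.

Definition in_fiH (b : R) (i n : nat) (z : R * R) : Prop :=
  exists w, inH b w /\ z = iter n (fmap b i) w.

Definition in_fjfiH (b : R) (j i n : nat) (z : R * R) : Prop :=
  exists w, inH b w /\ z = fmap b j (iter n (fmap b i) w).

Definition Et (b : R) (i : nat) (z : R * R) : Prop :=
  let a := (b * (b - 1))^-1 in
  let c := (b - 1)^-1 in
  ~ inH b z /\
  if i == 0%N then
    (0 <= z.1 /\ z.1 < b^-1 /\ 0 <= z.2 /\ z.2 < b^-1)
  else if i == 1%N then
    (0 <= z.2 /\ z.2 < b^-1 /\ a < z.1 + z.2 /\ z.1 + z.2 <= c)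
  else
    (0 <= z.1 /\ z.1 < b^-1 /\ a < z.1 + z.2 /\ z.1 + z.2 <= c).

(* E_i, where {i,j,k} = {0,1,2} *)
Definition Eset (b : R) (i j k : nat) (z : R * R) : Prop :=
  (Et b i z \/ (exists n, (0 < n)%N /\ in_fjfiH b j i n z)
            \/ (exists n, (0 < n)%N /\ in_fjfiH b k i n z))
  /\ ~ (exists n, in_fiH b i n z).

(* tilde C_ij for ij in {01, 12, 02} *)
Definition Ct (b : R) (i j : nat) (z : R * R) : Prop :=
  let a := (b * (b - 1))^-1 in
  let c := (b - 1)^-1 in
  if (i == 0%N) && (j == 1%N) then
    (b^-1 <= z.1 /\ 0 <= z.2 /\ z.1 + z.2 <= a)
  else if (i == 1%N) && (j == 2%N) then
    (b^-1 <= z.1 /\ b^-1 <= z.2 /\ z.1 + z.2 <= c)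
  else
    (0 <= z.1 /\ b^-1 <= z.2 /\ z.1 + z.2 <= a).

Definition Cset (b : R) (i j : nat) (z : R * R) : Prop :=
  Ct b i j z /\ ~ (exists n, (0 < n)%N /\ in_fjfiH b i j n z)
             /\ ~ (exists n, (0 < n)%N /\ in_fjfiH b j i n z).

(* Omega = {0,1}^N, coded as nat -> bool (false = 0, true = 1; omega_1 = w 0) *)
Definition shift (w : nat -> bool) : nat -> bool := fun n => w n.+1.

(* one step of K_beta: new omega and the index of the digit subtracted *)
Definition Kdig (b : R) (w : nat -> bool) (z : R * R) : (nat -> bool) * nat :=
  if `[< Eset b 0 1 2 z >] then (w, 0%N)
  else if `[< Eset b 1 0 2 z >] then (w, 1%N)
  else if `[< Eset b 2 0 1 z >] then (w, 2%N)
  else if `[< Cset b 0 1 z >] then (shift w, if w 0%N then 1%N else 0%N)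
  else if `[< Cset b 1 2 z >] then (shift w, if w 0%N then 2%N else 1%N)
  else if `[< Cset b 0 2 z >] then (shift w, if w 0%N then 2%N else 0%N)
  else (w, 0%N). (* unreachable on S_beta, where the E_i, C_ij partition *)

Definition Kb (b : R) (p : (nat -> bool) * (R * R)) : (nat -> bool) * (R * R) :=
  let d := Kdig b p.1 p.2 in
  (d.1, (b * p.2.1 - (qv d.2).1, b * p.2.2 - (qv d.2).2)).

(* d_{n+1}(w, z) = index of the digit subtracted at the (n+1)-th step *)
Definition digits (b : R) (w : nat -> bool) (z : R * R) (n : nat) : nat :=
  let p := iter n (Kb b) (w, z) in (Kdig b p.1 p.2).2.

End Defs.

Definition lexlt_bool (w w' : nat -> bool) : Prop :=
  exists n, (forall k, (k < n)%N -> w k = w' k) /\ w n = false /\ w' n = true.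

Definition lexlt_nat (u v : nat -> nat) : Prop :=
  exists n, (forall k, (k < n)%N -> u k = v k) /\ (u n < v n)%N.

Definition lexle_nat (u v : nat -> nat) : Prop :=
  (forall k, u k = v k) \/ lexlt_nat u v.

(* Main.v *)
Require Import Defs.
From HB Require Import structures.
From mathcomp Require Import all_boot all_order all_algebra.
From mathcomp Require Import all_classical all_reals all_analysis.
Import Order.TTheory GRing.Theory Num.Theory.
Local Open Scope ring_scope.

Section Aux.
Variable R : realType.
Variable b : R.

Definition Dg (p : (nat -> bool) * (R * R)) (k : nat) : nat :=
  (Kdig b (iter k (Kb b) p).1 (iter k (Kb b) p).2).2.

Lemma Dg_S p k : Dg p k.+1 = Dg (Kb b p) k.
Proof. by rewrite /Dg iterSr. Qed.

Lemma Kdig_cases (y : R * R) :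
  (exists d, forall u, Kdig b u y = (u, d)) \/
  (exists i j, (i < j)%N /\ forall u, Kdig b u y = @pair (nat -> bool) nat (Defs.shift u) (if u 0%N then j else i)).
Proof.
rewrite /Kdig.
case: `[< Eset b 0 1 2 y >]; first by left; exists 0%N.
case: `[< Eset b 1 0 2 y >]; first by left; exists 1%N.
case: `[< Eset b 2 0 1 y >]; first by left; exists 2%N.
case: `[< Cset b 0 1 y >]; first by right; exists 0%N, 1%N.
case: `[< Cset b 1 2 y >]; first by right; exists 1%N, 2%N.
case: `[< Cset b 0 2 y >]; first by right; exists 0%N, 2%N.
by left; exists 0%N.
Qed.

Lemma mainlem k : forall n (u u' : nat -> bool) y,
  (forall t, (t < n)%N -> u t = u' t) -> u n = false -> u' n = true ->
  (forall j, (j < k)%N -> Dg (u, y) j = Dg (u', y) j) ->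
  Dg (u, y) k <> Dg (u', y) k -> (Dg (u, y) k < Dg (u', y) k)%N.
Proof.
elim: k => [|k IH] n u u' y Hag Hn Hn' Hj Hne.
  move: Hne; rewrite /Dg /=.
  case: (Kdig_cases y) => [[d Hd]|[i [j [Hij Hd]]]]; rewrite !Hd //=.
  case: n Hag Hn Hn' => [|n] Hag Hn Hn'; first by rewrite Hn Hn'.
  by rewrite (Hag 0%N).
have H0 := Hj 0%N (ltn0Sn k).
move: Hne; rewrite !Dg_S => Hne.
have Hj' : forall j, (j < k)%N -> Dg (Kb b (u, y)) j = Dg (Kb b (u', y)) j.
  by move=> j0 Hj0; rewrite -!Dg_S; apply: Hj.
move: Hj' Hne H0; rewrite /Kb /Dg /=.
case: (Kdig_cases y) => [[d Hd]|[i [j [Hij Hd]]]]; rewrite !Hd /= => Hj' Hne H0.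
  exact: (IH n u u' _ Hag Hn Hn' Hj' Hne).
case: n Hag Hn Hn' => [|n] Hag Hn Hn'.
  by move: H0; rewrite Hn Hn' => H0; rewrite H0 ltnn in Hij.
have E0 : u 0%N = u' 0%N by apply: Hag.
move: Hj' Hne; rewrite E0 => Hj' Hne.
apply: (IH n (Defs.shift u) (Defs.shift u') _ _ Hn Hn' Hj' Hne).
by move=> t Ht; apply: Hag.
Qed.

End Aux.

Theorem theorem6p5 (R : realType) (b : R) (S : set (R * R)) :
  3 / 2 < b ->
  (exists bs : R, bs ^+ 3 - 2 * bs ^+ 2 + 2 * bs = 2 /\ b <= bs) ->
  is_attractor b S ->
  forall w w' : nat -> bool, lexlt_bool w w' ->
  forall z : R * R, S z ->
  lexle_nat (digits b w z) (digits b w' z).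
Proof.
move=> _ _ _ w w' [n [Hag [Hn Hn']]] z _.
case: (pselect (exists k, digits b w z k != digits b w' z k)) => [Hex|Hno].
  right.
  case: (ex_minnP Hex) => k Hk Hmin.
  have Heq : forall j, (j < k)%N -> digits b w z j = digits b w' z j.
    move=> j Hjk; apply/eqP; apply: contraTT Hjk => Hne.
    by rewrite -leqNgt; apply: Hmin.
  exists k; split => //.
  have Hk' : digits b w z k <> digits b w' z k by apply/eqP.
  exact: (@mainlem R b k n w w' z Hag Hn Hn' Heq Hk').
left => k; apply/eqP; apply: contrapT => H; apply: Hno; exists k; exact/negP.
Qed.
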